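(* Let $S$ be a finite $2$-group and suppose there are $A,B\in\mathcal{A}(S)$ with $AB=S$. If $C_B(a)=A\cap B$ for every $a\in A\setminus(A\cap B)$, then $\mathcal{A}(S)=\{A,B\}$ and every involution of $S$ lies in $A\cup B$.
   Context: $\mathcal{A}(S)$ denotes the set of elementary abelian subgroups of $S$ of maximal order (maximal rank). *)

(* Defs.v *)
From mathcomp Require Import all_boot all_fingroup all_solvable.
Set Implicit Arguments. Unset Strict Implicit. Unset Printing Implicit Defensive.
Local Open Scope group_scope.

Definition calA (gT : finGroupType) (p : nat) (S : {set gT}) : {set {group gT}} :=
  [set E : {group gT} | (E \in 'E_p(S)) &&
     [forall F : {group gT}, (F \in 'E_p(S)) ==> (#|F| <= #|E|)%N]].

(* Main.v *)
Require Import Defs.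
From mathcomp Require Import all_boot all_fingroup all_solvable.
Local Open Scope group_scope.

Lemma sq1 (gT : finGroupType) (E : {group gT}) x :
  2.-abelem E -> x \in E -> x * x = 1.
Proof.
move=> abE xE; have [->|nx1] := eqVneq x 1; first by rewrite mulg1.
have -> : x * x = x ^+ 2 by rewrite expgS expg1.
by rewrite -(abelem_order_p abE xE nx1) expg_order.
Qed.
Arguments sq1 {gT E x}.

Lemma calA_abelem (gT : finGroupType) (S E : {group gT}) :
  E \in calA 2 S -> E \subset S /\ 2.-abelem E.
Proof. by rewrite inE => /andP[/pElemP]. Qed.

Theorem lemma2p14 (gT : finGroupType) (S A B : {group gT}) :
  2.-group S ->
  A \in calA 2 S -> B \in calA 2 S ->
  A * B = S ->
  (forall a, a \in A :\: (A :&: B) -> 'C_B[a] = A :&: B) ->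
  calA 2 S = [set A; B] /\
  (forall x, x \in S -> #[x] = 2%N -> x \in A :|: B).
Proof.
move=> _ AA AB defS hC.
have [_ abA] := @calA_abelem _ S A AA; have [_ abB] := @calA_abelem _ S B AB.
have inv : forall x, x \in S -> x * x = 1 -> x \in A :|: B.
  move=> x; rewrite -defS => /mulsgP[a b Aa Bb ->] xx.
  have aa := sq1 abA Aa; have bb := sq1 abB Bb.
  have cab : commute a b.
    have: a * b * (a * b) * (b * a) = b * a by rewrite xx mul1g.
    by rewrite !mulgA -(mulgA _ b b) bb mulg1 -(mulgA _ a a) aa mulg1.
  case: (boolP (a \in B)) => aB; first by rewrite inE (groupM aB Bb) orbT.
  have aD : a \in A :\: (A :&: B) by rewrite !inE (negbTE aB) Aa.
  have : b \in 'C_B[a] by rewrite inE Bb; apply/cent1P.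
  by rewrite (hC a aD) => /setIP[bA _]; rewrite inE (groupM Aa bA).
split; last first.
  move=> x Sx ox; apply: inv Sx _.
  have -> : x * x = x ^+ 2 by rewrite expgS expg1.
  by rewrite -ox expg_order.
apply/setP=> E; rewrite in_set2.
apply/idP/idP; last by case/orP=> /eqP->.
move=> EA; have [sES abE] := @calA_abelem _ S E EA.
have sEAB : forall x, x \in E -> x \in A :|: B.
  by move=> x Ex; apply: inv (subsetP sES x Ex) (sq1 abE Ex).
have EAf : forall F : {group gT}, F \in calA 2 S -> E \subset F -> E = F :> {set gT}.
  move=> F FA sEF; apply/eqP; rewrite eqEcard sEF.
  move: EA FA; rewrite !inE => /andP[_ /forallP /(_ F) hE] /andP[FE _].
  by apply: (implyP hE); rewrite inE.
case: (boolP (E \subset A)) => [sEA|nEA].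
  by rewrite (group_inj (EAf A AA sEA)) eqxx.
case: (boolP (E \subset B)) => [sEB|nEB].
  by rewrite (group_inj (EAf B AB sEB)) eqxx orbT.
exfalso.
have [x Ex xA] := subsetPn nEA.
have [y Ey yB] := subsetPn nEB.
have xB : x \in B by move: (sEAB x Ex); rewrite inE (negbTE xA).
have yA : y \in A by move: (sEAB y Ey); rewrite inE (negbTE yB) orbF.
move: (sEAB _ (groupM Ex Ey)); rewrite inE => /orP[xyA|xyB].
  by move: xA; rewrite -(groupMr _ yA) xyA.
by move: yB; rewrite -(groupMl _ xB) xyB.
Qed.
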